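(* Let $k\ge2$, $n=2^k-1$, and let $C$ be the binary simplex $(n,k)$ code. For every correctable erasure pattern with at least one erased node, there exists an erased node that allows for easy repair.
   Context: The binary simplex $(n,k)$ code has generator matrix $G\in\mathbb F_2^{k\times n}$ whose columns $g_1,\dots,g_n$ are all the distinct nonzero vectors of $\mathbb F_2^k$. Nodes are the coordinates $c_1,\dots,c_n$ of codewords $c=uG$. An erasure pattern is a set $S^e\subseteq\{1,\dots,n\}$ of erased nodes; the other nodes are live. The pattern is correctable if no two distinct codewords coincide on all live positions. A node $c_i$ is related to distinct nodes $c_{j_1},\dots,c_{j_\gamma}$ (all different from $c_i$) if $g_i=g_{j_1}+\dots+g_{j_\gamma}$. An erased node allows for easy repair if it is related to $\gamma\le 2$ nodes which are all live. *)

(* Defs.v *)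
From mathcomp Require Import all_boot all_order all_algebra.
Set Implicit Arguments. Unset Strict Implicit. Unset Printing Implicit Defensive.
Import GRing.Theory.
Local Open Scope ring_scope.

(* Binary linear code with generator matrix G : 'M['F_2]_(k, n);
   codewords are c = u *m G for u : 'rV_k; node i is the coordinate c_i,
   with generator column g_i = col i G. *)

(* G is a generator matrix of the binary simplex (2^k-1, k) code:
   its columns are pairwise distinct and nonzero (with n = 2^k - 1 they are
   then exactly all nonzero vectors of F_2^k). *)
Definition simplex_generator (k : nat) (G : 'M['F_2]_(k, 2 ^ k - 1)) : Prop :=
  (forall i, col i G != 0) /\ injective (fun i => col i G).

Definition correctable (k n : nat) (G : 'M['F_2]_(k, n)) (S : {set 'I_n}) : Prop :=
  forall u v : 'rV['F_2]_k,
    (forall i, i \notin S -> (u *m G) 0 i = (v *m G) 0 i) ->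
    u *m G = v *m G.

Definition related (k n : nat) (G : 'M['F_2]_(k, n)) (i : 'I_n) (J : {set 'I_n}) : Prop :=
  i \notin J /\ col i G = \sum_(j in J) col j G.

Definition easy_repair (k n : nat) (G : 'M['F_2]_(k, n)) (S : {set 'I_n}) (i : 'I_n) : Prop :=
  i \in S /\
  exists J : {set 'I_n}, [/\ (0 < #|J|)%N, (#|J| <= 2)%N, [disjoint J & S] & related G i J].

(* Main.v *)
Require Import Defs.
From mathcomp Require Import all_boot all_order all_algebra.
From mathcomp Require Import zify.
Import GRing.Theory.
Local Open Scope ring_scope.
From Stdlib Require Import Classical.
Lemma F2cases (x : 'F_2) : x = 0 \/ x = 1.
Proof. case: x => [[|[|m]] Hm]; [left|right|]; try exact: val_inj. by []. Qed.
Lemma F2xx (x : 'F_2) : x + x = 0.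
Proof. by case: (F2cases x) => ->; apply: val_inj. Qed.
Lemma mxxx k n (M : 'M['F_2]_(k,n)) : M + M = 0.
Proof. by apply/matrixP=> i j; rewrite !mxE F2xx. Qed.
Lemma surj k (hk : (1 <= k)%N) (G : 'M['F_2]_(k, 2 ^ k - 1)) (hG : simplex_generator G)
  (g : 'cV['F_2]_k) : g != 0 -> exists i, col i G = g.
Proof.
move=> g0; case: hG => hnz hinj.
case: (boolP [exists i, col i G == g]) => [/existsP[i /eqP]|]; first by exists i.
rewrite negb_exists => /forallP hno; exfalso.
have hsub : [set col i G | i in 'I_(2^k-1)] \subset [set: 'cV['F_2]_k] :\ 0 :\ g.
  apply/subsetP=> x /imsetP[i _ ->]; by rewrite !inE hno hnz.
have := subset_leq_card hsub.
rewrite card_imset // card_ord.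
have e2 : (2 <= 2 ^ k)%N.
  by rewrite -{1}(expn1 2) leq_exp2l.
have c1 := cardsD1 g ([set: 'cV['F_2]_k] :\ 0). have c2 := cardsD1 (0:'cV['F_2]_k) [set: 'cV['F_2]_k]. rewrite !inE g0 /= in c1 c2. rewrite cardsT card_mx card_Fp // muln1 in c2.
move: (2^k)%N e2 c2 => N e2 c2. move: c1 c2. move: #|_ :\ 0 :\ g| => a. move: #|_ :\ 0| => b. lia.
Qed.

Local Close Scope ring_scope.
Theorem lemma3p3 (k : nat) (hk : 2 <= k) (G : 'M['F_2]_(k, 2 ^ k - 1))
  (hG : simplex_generator G) (S : {set 'I_(2 ^ k - 1)})
  (hS : S != set0) (hcorr : correctable G S) :
  exists i, i \in S /\ easy_repair G S i.
Proof.
Local Open Scope ring_scope.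
have hk1 : (1 <= k)%N by apply: leq_trans hk.
case: (hG) => hnz hinj.
apply: Classical_Prop.NNPP => Hno.
have Hnoi : forall i, i \in S -> ~ easy_repair G S i.
  by move=> i hi he; apply: Hno; exists i.
have key : forall j1 j2, j1 \notin S -> j2 \notin S -> j1 != j2 ->
   exists2 i, i \notin S & col i G = col j1 G + col j2 G.
  move=> j1 j2 h1 h2 h12.
  have nz : col j1 G + col j2 G != 0.
    apply: contra h12 => /eqP e; apply/eqP; apply: hinj => /=.
    by rewrite -[col j1 G]addr0 -e addrA mxxx add0r.
  have [i hi] := @surj k hk1 G hG _ nz.
  exists i => //; apply/negP => iS; apply: (Hnoi i iS); split => //.
  exists [set j1; j2]; split.
  - by rewrite cards2 h12.
  - by rewrite cards2 h12.
  - rewrite disjoint_subset; apply/subsetP => x; rewrite !inE => /orP[]/eqP-> ; done.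
  - split.
    + rewrite !inE; apply/negP => /orP[]/eqP ei.
      * move: hi; rewrite ei => /(congr1 (fun M => M - col j1 G)).
        rewrite subrr addrC addKr => /esym/eqP; by rewrite (negPf (hnz j2)).
      * move: hi; rewrite ei => /(congr1 (fun M => M - col j2 G)).
        rewrite subrr addrK => /esym/eqP; by rewrite (negPf (hnz j1)).
    + by rewrite big_setU1 ?inE //= big_set1 hi.
case/set0Pn: hS => i0 i0S.
pose A := \matrix_(r, i) (if i \in S then 0 else G r i).
have colA : forall i, col i A = if i \in S then 0 else col i G.
  move=> i; apply/matrixP => r c; rewrite !mxE; by case: (i \in S); rewrite ?mxE.
have uG0 : forall u : 'rV['F_2]_k, u *m G = 0 -> u = 0.
  move=> u hu; apply/rowP => j; rewrite mxE.
  have dnz : delta_mx j (0 : 'I_1) != 0 :> 'cV['F_2]_k.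
    apply/eqP => /matrixP/(_ j 0); rewrite !mxE !eqxx /= => /eqP.
    by rewrite oner_eq0.
  have [i hi] := @surj k hk1 G hG _ dnz.
  have Gi : forall r, G r i = (r == j)%:R.
    by move=> r; have := congr1 (fun M : 'cV['F_2]_k => M r 0) hi; rewrite !mxE andbT.
  have := congr1 (fun M : 'rV['F_2]_(2^k-1) => M 0 i) hu; rewrite !mxE.
  rewrite (bigD1 j) //= big1 ?Gi ?eqxx ?mulr1 ?addr0 //.
  by move=> r /negPf hr; rewrite Gi hr mulr0.
have ker0 : kermx A = 0.
  apply/row_matrixP => r; rewrite row0.
  apply: uG0.
  have := hcorr (row r (kermx A)) 0.
  rewrite mul0mx => -> // i hi.
  rewrite [in RHS]mxE; transitivity ((kermx A *m A) r i); last by rewrite mulmx_ker mxE.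
  rewrite !mxE; apply: eq_bigr => j _; rewrite !mxE (negPf hi).
  done.
have rA : \rank A = k.
  have := mxrank_ker A; rewrite ker0 mxrank0.
  have := rank_leq_row A. lia.
have full : row_full A^T by rewrite /row_full mxrank_tr rA.
have /submxP [D hD] := submx_full (col i0 G)^T full.
have hsum : col i0 G = \sum_i D 0 i *: col i A.
  apply/matrixP => r c; rewrite [c]ord1.
  have := congr1 (fun M : 'rV['F_2]_k => M 0 r) hD; rewrite !mxE => ->.
  rewrite summxE; apply: eq_bigr => i _; rewrite !mxE.
  done.
pose P (g : 'cV['F_2]_k) := (g == 0) || [exists j, (j \notin S) && (col j G == g)].
have : P (col i0 G).
  rewrite hsum; apply: (big_ind P).
  - by rewrite /P eqxx.
  - move=> x y /orP[/eqP->|/existsP[j1 /andP[h1 /eqP<-]]]; first by rewrite add0r.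
    move=> /orP[/eqP->|/existsP[j2 /andP[h2 /eqP<-]]]; first by rewrite addr0 /P; apply/orP; right; apply/existsP; exists j1; rewrite h1 eqxx.
    case: (eqVneq j1 j2) => [->|h12]; first by rewrite mxxx /P eqxx.
    have [i hi <-] := key j1 j2 h1 h2 h12.
    by apply/orP; right; apply/existsP; exists i; rewrite hi eqxx.
  - move=> i _; rewrite colA; case: ifP => hiS; first by rewrite scaler0 /P eqxx.
    case: (F2cases (D 0 i)) => ->; first by rewrite scale0r /P eqxx.
    by rewrite scale1r /P; apply/orP; right; apply/existsP; exists i; rewrite hiS eqxx.
case/orP => [/eqP h|/existsP[j /andP[hj /eqP e]]]; first by move: (hnz i0); rewrite h eqxx.
have ej : j = i0 by apply: hinj.
by move: hj; rewrite ej i0S.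
Qed.
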